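(* Let $\Bbbk$ be a field, $n\ge2$, $q\in\Bbbk$ a primitive $n$-th root of unity, $C_n=\langle g\rangle$ the cyclic group of order $n$ and $A$ a unital associative $\Bbbk$-algebra. Let $\cdot:\Bbbk C_n\otimes A\to A$ be a partial action of $\Bbbk C_n$ on $A$. Then for each $w\in A$ such that $g^i\cdot w=q^{-i}(g^i\cdot1_A)w$ for all $0\le i\le n-1$, one has $(g^i\cdot w)^\ell=q^{-i\ell}(g^i\cdot1_A)w^\ell$ for all $\ell\ge1$ and $0\le i\le n-1$. Moreover, if the partial action is symmetric, then $(g^i\cdot w)^\ell=q^{-i\ell}w^\ell(g^i\cdot1_A)$.
   Context: $\Bbbk C_n$ is the group Hopf algebra with $g$ group-like. A partial action of a bialgebra $H$ on $A$ is a linear map $\cdot:H\otimes A\to A$ with $1_H\cdot a=a$, $h\cdot(ab)=(h_1\cdot a)(h_2\cdot b)$, $h\cdot(k\cdot a)=(h_1\cdot1_A)(h_2k\cdot a)$; it is symmetric if moreover $h\cdot(k\cdot a)=(h_1k\cdot a)(h_2\cdot1_A)$. *)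

(* Defs.v *)
From HB Require Import structures.
From mathcomp Require Import all_boot all_order all_algebra.
Set Implicit Arguments. Unset Strict Implicit. Unset Printing Implicit Defensive.
Import GRing.Theory.
Local Open Scope ring_scope.

(* A partial action of the group Hopf algebra K C_n on A, given by the linear
   maps act i = (g^i . _), i in C_n = 'Z_n (written additively, g^i <-> i).
   For H = K C_n the axioms for arbitrary h, k in H follow by (bi)linearity
   from the axioms on the group-like basis elements g^i (Delta g^i = g^i (x) g^i). *)
Definition is_partial_action (K : fieldType) (n : nat) (A : algType K)
    (act : 'Z_n -> {linear A -> A}) : Prop :=
  [/\ (forall a : A, act 0 a = a),
      (forall (i : 'Z_n) (a b : A), act i (a * b) = act i a * act i b) &
      (forall (i j : 'Z_n) (a : A), act i (act j a) = act i 1 * act (i + j) a)].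

Definition is_symmetric_partial_action (K : fieldType) (n : nat) (A : algType K)
    (act : 'Z_n -> {linear A -> A}) : Prop :=
  is_partial_action act /\
  (forall (i j : 'Z_n) (a : A), act i (act j a) = act (i + j) a * act i 1).

(* Main.v *)
Require Import Defs.
From HB Require Import structures.
From mathcomp Require Import all_boot all_order all_algebra.
Import GRing.Theory.
Local Open Scope ring_scope.

Theorem lemma3p5 (K : fieldType) (n : nat) (q : K) (A : algType K)
    (act : 'Z_n -> {linear A -> A}) :
  (2 <= n)%N -> n.-primitive_root q -> is_partial_action act ->
  forall w : A,
    (forall i : 'Z_n, act i w = q ^- i *: (act i 1 * w)) ->
    (forall (l : nat) (i : 'Z_n), (1 <= l)%N ->
        (act i w) ^+ l = q ^- (i * l) *: (act i 1 * w ^+ l)) /\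
    (is_symmetric_partial_action act ->
     forall (l : nat) (i : 'Z_n), (1 <= l)%N ->
        (act i w) ^+ l = q ^- (i * l) *: (w ^+ l * act i 1)).
Proof.
move=> n2 prim [H0 HM H3] w Hw.
have qn0 : q != 0.
  apply/eqP => q0; move: (prim_expr_order prim); rewrite q0 expr0n.
  by rewrite eqn0Ngt (leq_trans _ n2) // => /eqP; rewrite eq_sym oner_eq0.
have main : forall (l : nat) (i : 'Z_n), (1 <= l)%N ->
    (act i w) ^+ l = q ^- (i * l) *: (act i 1 * w ^+ l).
  move=> l i l1.
  set e := act i 1.
  have ewe : e * w * e = e * w.
    have := HM i w 1; rewrite mulr1 Hw -scalerAl => /esym /eqP.
    by rewrite (inj_eq (scalerI _)) ?invr_eq0 ?expf_neq0 // => /eqP.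
  have ewl : forall m, (e * w) ^+ m.+1 = e * w ^+ m.+1.
    elim=> [|m IH]; first by rewrite !expr1.
    by rewrite exprS IH mulrA ewe -mulrA -exprS.
  rewrite Hw exprZn -exprVn -exprM.
  by case: l l1 => [|l] // _; rewrite ewl exprVn.
split=> [//|[_ Hs] l i l1].
rewrite main //; congr (_ *: _).
have := Hs i (- i) (w ^+ l); rewrite H3 addrN !H0 => ->.
done.
Qed.
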